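(* Let $\pi$ be a projective plane of order $q$, let $2\le n\le q$, and let $\phi$ be an embedding of the complete bipartite graph $K_{n,q}$ into $\pi$, where $U$ and $V$ are the two classes of $K_{n,q}$ with $|U|=n$ and $|V|=q$. Then the points of $\phi(U)$ are collinear.
   Context: A finite projective plane of order $q$ has $q^2+q+1$ points and lines, $q+1$ points on each line and $q+1$ lines through each point; any two distinct points lie on a unique line and any two lines meet in a unique point. An embedding of a simple graph $G=(V,E)$ into a projective plane is an injective map $\phi$ from $V$ to the points such that the induced map sending an edge $ab$ to the line through $\phi(a),\phi(b)$ is injective on $E$. *)

(* Defs.v *)
From mathcomp Require Import all_boot.
Set Implicit Arguments. Unset Strict Implicit. Unset Printing Implicit Defensive.

Definition proj_plane (P L : finType) (inc : P -> L -> bool) (q : nat) : Prop :=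
  [/\ #|P| = q ^ 2 + q + 1 /\ #|L| = q ^ 2 + q + 1,
      (forall l : L, #|[set p | inc p l]| = q.+1),
      (forall p : P, #|[set l | inc p l]| = q.+1),
      (forall p1 p2 : P, p1 != p2 ->
          exists! l : L, inc p1 l && inc p2 l)
    & (forall l1 l2 : L, l1 != l2 ->
          exists! p : P, inc p l1 && inc p l2)].

(* Embedding of a simple graph (V, adj) into the plane: an injective map on
   vertices such that the induced map sending an edge ab to the line through
   phi a and phi b is injective on edges (edges being unordered pairs). *)
Definition embedding (V : finType) (adj : rel V) (P L : finType)
  (inc : P -> L -> bool) (phi : V -> P) : Prop :=
  injective phi /\
  forall (a b c d : V) (l : L), adj a b -> adj c d ->
    inc (phi a) l -> inc (phi b) l -> inc (phi c) l -> inc (phi d) l ->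
    (a = c /\ b = d) \/ (a = d /\ b = c).

(* The complete bipartite graph K_{n,m} on vertex set 'I_n + 'I_m, with
   classes U = inl-vertices and V = inr-vertices. *)
Definition Kbip (n m : nat) : rel ('I_n + 'I_m)%type :=
  fun x y => match x, y with
             | inl _, inr _ | inr _, inl _ => true
             | _, _ => false
             end.

(* Main.v *)
Require Import Defs.
From mathcomp Require Import all_boot.

Theorem lemma3p4 (P L : finType) (inc : P -> L -> bool) (q n : nat)
  (phi : ('I_n + 'I_q)%type -> P) :
  proj_plane inc q -> 2 <= n -> n <= q ->
  embedding (@Kbip n q) inc phi ->
  exists l : L, forall u : 'I_n, inc (phi (inl u)) l.
Proof.
move=> [_ _ hP hpp _] n2 nq [inj emb].
have n0 : 0 < n by apply: leq_trans n2.
pose u0 : 'I_n := Ordinal n0.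
pose x := phi (inl u0).
have ex : forall p, p != x -> exists l, inc x l && inc p l.
  move=> p hp; have hxp : x != p by rewrite eq_sym.
  have [l [hl _]] := hpp x p hxp.
  by exists l.
have hx : forall w, w != inl u0 -> phi w != x.
  by move=> w hw; apply/eqP => /inj /eqP; rewrite (negbTE hw).
have [l0 _] : exists l0 : L, True.
  have [l /andP[_ _]] := ex _ (hx (inr (Ordinal (leq_trans n0 nq))) isT).
  by exists l.
pose lj (j : 'I_q) := odflt l0 [pick l | inc x l && inc (phi (inr j)) l].
have ljP : forall j, inc x (lj j) && inc (phi (inr j)) (lj j).
  move=> j; rewrite /lj; case: pickP => [l // | none].
  have [l hl] := ex _ (hx (inr j) isT).
  by rewrite none in hl.
have ljinj : injective lj.
  move=> j k e; have /andP[h1 h2] := ljP j; have /andP[_ h3] := ljP k.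
  rewrite e in h1 h2.
  have [[_ E]|[E _]] := emb (inl u0) (inr j) (inl u0) (inr k) (lj k) isT isT h1 h2 h1 h3.
    by case: E.
  by [].
pose S := [set l | inc x l].
pose img := lj @: [set: 'I_q].
have sub : img \subset S.
  by apply/subsetP => l /imsetP [j _ ->]; rewrite inE; case/andP: (ljP j).
have cimg : #|img| = q by rewrite card_imset // cardsT card_ord.
have c1 : #|S :\: img| = 1.
  by rewrite cardsD (setIidPr sub) cimg /S hP subSnn.
have [l El] := cards1P (introT eqP c1).
exists l => u.
have [->|ne] := eqVneq u u0.
  have : l \in S :\: img by rewrite El set11.
  by rewrite !inE => /andP[_].
have ne' : inl u != inl u0 :> ('I_n + 'I_q)%type by apply: contra_neq ne => -[].
have [m /andP[m1 m2]] := ex _ (hx _ ne').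
have : m \in S :\: img.
  rewrite !inE m1 andbT; apply/imsetP => -[j _ E].
  have /andP[_ h3] := ljP j; rewrite -E in h3.
  have [[E1 _]|[E1 _]] := emb (inl u0) (inr j) (inl u) (inr j) m isT isT m1 h3 m2 h3.
    by case: E1 => E1; rewrite E1 eqxx in ne.
  by [].
by rewrite El inE => /eqP <-.
Qed.
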